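(* Let $G$ be a graph, $H=G^2$, and $n\ge 1$. Then every induced subgraph of $H$ isomorphic to $K_{1,n}$ is contained in a (not necessarily induced) subgraph of $H$ isomorphic to $(D_n)^2$ or to $(D_n^-)^2$.
   Context: All graphs are finite and simple. For a graph $H$, the square $H^2$ has vertex set $V(H)$, two distinct vertices being adjacent iff their distance in $H$ is at most $2$. $D_n$ is the graph with vertex set $\{v,u_1,\dots,u_n,w_1,\dots,w_n\}$ and edge set $\{vu_i:1\le i\le n\}\cup\{u_iw_i:1\le i\le n\}$ (a subdivided star), and $D_n^-$ is the graph $D_n-w_n$ obtained by deleting the vertex $w_n$. *)

(* Defs.v *)
From mathcomp Require Import all_boot.
Set Implicit Arguments. Unset Strict Implicit. Unset Printing Implicit Defensive.

Definition simple_graph (T : finType) (e : rel T) : Prop :=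
  symmetric e /\ irreflexive e.

Definition sq (T : finType) (e : rel T) : rel T :=
  fun x y => (x != y) && (e x y || [exists z, e x z && e z y]).

(* Vertices of D_n: None = v, Some (inl i) = u_i, Some (inr i) = w_i
   (indices i : 'I_n, i.e. 0..n-1 instead of 1..n). *)
Definition DV (n : nat) : finType := option ('I_n + 'I_n).

Definition Dn_adj (n : nat) : rel (DV n) :=
  fun x y =>
    match x, y with
    | None, Some (inl _) => true
    | Some (inl _), None => true
    | Some (inl i), Some (inr j) => i == j
    | Some (inr i), Some (inl j) => i == j
    | _, _ => false
    end.

(* D_n^- = D_n - w_n : remove the vertex w_(n-1) (last index). *)
Definition keepm (n : nat) (x : DV n) : bool :=
  match x with
  | Some (inr i) => (val i).+1 != n
  | _ => true
  end.

Definition DmV (n : nat) : finType := {x : DV n | @keepm n x}.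

Definition Dnm_adj (n : nat) : rel (DmV n) :=
  fun x y => Dn_adj (val x) (val y).

Definition induced_star (T : finType) (eH : rel T) (n : nat)
  (c : T) (l : 'I_n -> T) : Prop :=
  injective l /\ (forall i, l i != c) /\ (forall i, eH c (l i)) /\
  (forall i j, i != j -> ~~ eH (l i) (l j)).

(* The star (c, l) is contained in a (not necessarily induced) subgraph of
   eH isomorphic to the graph (X, eX): there is an injective map phi from X
   into T mapping edges of eX to edges of eH, whose image subgraph contains
   the vertices and the edges of the star. *)
Definition star_in_copy (X : finType) (eX : rel X) (T : finType)
  (eH : rel T) (n : nat) (c : T) (l : 'I_n -> T) : Prop :=
  exists phi : X -> T,
    [/\ injective phi,
        (forall x y, eX x y -> eH (phi x) (phi y)) &
        exists xc, phi xc = c /\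
          forall i, exists xi, phi xi = l i /\ eX xc xi].

(* Main.v *)
Require Import Defs.
From mathcomp Require Import all_boot all_fingroup.
From mathcomp Require Import zify.
Set Implicit Arguments. Unset Strict Implicit. Unset Printing Implicit Defensive.

Lemma sq_sym (T : finType) (e : rel T) : symmetric e -> symmetric (sq e).
Proof.
move=> se x y; rewrite /sq eq_sym se; congr (_ && (_ || _)).
apply/existsP/existsP => -[z /andP[a b]]; exists z; by rewrite se b se a.
Qed.

Lemma close_contra (T : finType) (e : rel T) (n : nat) (c : T) (l : 'I_n -> T) :
  simple_graph e -> induced_star (sq e) c l ->
  forall i j z, i != j -> (z == l i) || e z (l i) -> (z == l j) || e z (l j) -> False.
Proof.
move=> [se ie] [linj [_ [_ ln]]] i j z ij.
have lij : l i != l j by apply: contra ij => /eqP /linj ->.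
have := ln i j ij; rewrite /sq lij /= negb_or => /andP[na /existsPn nb].
case/orP => [/eqP -> | a]; case/orP => [/eqP b | b].
- by rewrite b eqxx in lij.
- by rewrite b in na.
- by rewrite b se in a; rewrite a in na.
- by have := nb z; rewrite se a b.
Qed.

Definition pt (T : finType) (e : rel T) (c y : T) : T :=
  if e c y then y else odflt c [pick z | e c z && e z y].

Lemma pt_spec (T : finType) (e : rel T) (c y : T) : sq e c y ->
  e c (pt e c y) /\ (~~ e c y -> e (pt e c y) y).
Proof.
rewrite /sq /pt => /andP[_ H]; case: ifP => [-> //| F].
rewrite F /= in H; case: pickP => [z /andP[a b] // | N].
by case/existsP: H => z; rewrite N.
Qed.

Definition mkphi (T : finType) (n : nat) (c : T) (P L : 'I_n -> T) (x : DV n) : T :=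
  match x with None => c | Some (inl j) => P j | Some (inr j) => L j end.

Lemma hom_lemma (T : finType) (e : rel T) (n : nat) (c : T) (P L : 'I_n -> T)
  (K : pred (DV n)) : symmetric (sq e) ->
  (forall j, sq e c (P j)) ->
  (forall j j', j != j' -> sq e (P j) (P j')) ->
  (forall j, K (Some (inr j)) -> sq e c (L j)) ->
  (forall j, K (Some (inr j)) -> sq e (P j) (L j)) ->
  forall x y, K x -> K y -> sq (@Dn_adj n) x y -> sq e (mkphi c P L x) (mkphi c P L y).
Proof.
move=> ss H1 H2 H3 H4.
move=> [[j|j]|] [[j'|j']|] Kx Ky /andP[neq /orP[A| /existsP[[[z|z]|] /andP[A B]]]] //.
all: simpl in *.
all: repeat match goal with H : is_true (_ == _) |- _ => move/eqP: H => H; subst end.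
all: try by rewrite eqxx in neq.
all: first [ by apply: H1 | by rewrite ss; apply: H1 | by apply: H3 | by rewrite ss; apply: H3
  | by apply: H4 | by rewrite ss; apply: H4
  | by apply: H2; apply: contra neq => /eqP -> ].
Qed.
Lemma inj_lemma (T : finType) (n : nat) (c : T) (P L : 'I_n -> T)
  (K : pred (DV n)) :
  injective P -> injective L -> (forall j, P j != c) ->
  (forall j, K (Some (inr j)) -> L j != c) ->
  (forall j j', K (Some (inr j')) -> P j != L j') ->
  forall x y, K x -> K y -> mkphi c P L x = mkphi c P L y -> x = y.
Proof.
move=> I1 I2 I3 I4 I5 [[j|j]|] [[j'|j']|] Kx Ky //= E.
- by rewrite (I1 _ _ E).
- by move: (I5 j j' Ky); rewrite E eqxx.
- by move: (I3 j); rewrite E eqxx.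
- by move: (I5 j' j Kx); rewrite E eqxx.
- by rewrite (I2 _ _ E).
- by move: (I4 j Kx); rewrite E eqxx.
- by move: (I3 j'); rewrite E eqxx.
- by move: (I4 j' Ky); rewrite E eqxx.
Qed.

Theorem theorem3 (T : finType) (e : rel T) (n : nat) (c : T) (l : 'I_n -> T) :
  simple_graph e -> 0 < n ->
  induced_star (sq e) c l ->
  star_in_copy (sq (@Dn_adj n)) (sq e) c l \/
  star_in_copy (sq (@Dnm_adj n)) (sq e) c l.
Proof.
move=> Hg n0 Hs; have Hs' := Hs; case: Hs' => [linj [lnc [cl ln]]].
have [se ie] := Hg.
have ss := sq_sym se.
have cc := close_contra Hg Hs.
pose p i := pt e c (l i).
have pc : forall i, e c (p i) by move=> i; case: (pt_spec (cl i)).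
have pnl : forall i, ~~ e c (l i) -> e (p i) (l i) by move=> i; case: (pt_spec (cl i)).
have pcl : forall i, (p i == l i) || e (p i) (l i).
  move=> i; case E: (e c (l i)); last by rewrite pnl ?E ?orbT.
  by rewrite /p /pt E eqxx.
have pinj : injective p.
  move=> i j E; apply/eqP; apply/negPn/negP => ij.
  by apply: (cc i j (p i) ij (pcl i)); rewrite E pcl.
have pnc : forall i, p i != c.
  by move=> i; apply/eqP => E; have := pc i; rewrite E ie.
have pL : forall i j, i != j -> p i != l j.
  by move=> i j ij; apply/eqP => E; apply: (cc i j (p i) ij (pcl i)); rewrite E eqxx.
have one : forall i j, e c (l i) -> e c (l j) -> i = j.
  move=> i j a b; apply/eqP; apply/negPn/negP => ij.
  by apply: (cc i j c ij); rewrite ?a ?b orbT.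
have sqcp : forall i, sq e c (p i) by move=> i; rewrite /sq pc /= eq_sym pnc.
have sqpp : forall i j, i != j -> sq e (p i) (p j).
  move=> i j ij; rewrite /sq (inj_eq pinj) ij /=; apply/orP; right.
  by apply/existsP; exists c; rewrite se !pc.
have sqpl : forall i, ~~ e c (l i) -> sq e (p i) (l i).
  move=> i h; rewrite /sq pnl // orTb andbT; apply/eqP => E.
  by have := pnl i h; rewrite E ie.
have pne : forall i j, ~~ e c (l j) -> p i != l j.
  move=> i j h; case: (eqVneq i j) => [->|ij]; last exact: pL.
  by apply/eqP => E; have := pnl j h; rewrite E ie.
case: (boolP [exists k, e c (l k)]) => [/existsP[k Hk]|/existsPn none].
- right.
  pose last : 'I_n := @Ordinal n n.-1 (eq_ind_r is_true n0 (ltn_predL n)).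
  pose s := tperm k last.
  have keepE : forall j : 'I_n, keepm (Some (inr j)) = (j != last).
    move=> j; rewrite /keepm /= -(inj_eq val_inj) /=.
    by apply/idP/idP; apply: contra => /eqP E; apply/eqP; move: (ltn_ord j); lia.
  have sk : forall j, keepm (Some (inr j)) -> s j != k.
    move=> j; rewrite keepE; apply: contra => /eqP E.
    by rewrite -(tpermK k last j) -/s E tpermL.
  have nk : forall j, keepm (Some (inr j)) -> ~~ e c (l (s j)).
    move=> j /sk; apply: contra => h; apply/eqP; exact: one h Hk.
  exists (fun x : DmV n => mkphi c (p \o s) (l \o s) (val x)); split.
  + move=> x y E; apply: val_inj.
    apply: (@inj_lemma _ _ c (p \o s) (l \o s) (@keepm n)) (valP x) (valP y) E.
    * by move=> i j /= /pinj /perm_inj.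
    * by move=> i j /= /linj /perm_inj.
    * by move=> j; apply: pnc.
    * by move=> j _; apply: lnc.
    * by move=> j j' K /=; apply: pne; apply: nk.
  + move=> x y xy.
    apply: (@hom_lemma _ e n c (p \o s) (l \o s) (@keepm n) ss) (valP x) (valP y) _.
    * by move=> j; apply: sqcp.
    * by move=> j j' jj /=; apply: sqpp; rewrite (inj_eq perm_inj).
    * by move=> j _; apply: cl.
    * by move=> j K /=; apply: sqpl; apply: nk.
    * move: xy => /andP[xy H]; rewrite -(inj_eq val_inj) in xy; rewrite /sq xy /=.
      case/orP: H => [A|/existsP[z /andP[a b]]]; first by rewrite /Dnm_adj in A; rewrite A.
      by apply/orP; right; apply/existsP; exists (val z); apply/andP.
  + exists (@exist (DV n) (fun x => is_true (@keepm n x)) None erefl); split => // i.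
    case: (eqVneq i k) => [-> | ik].
    * exists (@exist (DV n) (fun x => is_true (@keepm n x)) (Some (inl (s k))) erefl); split.
        by rewrite /= tpermK /p /pt Hk.
      by apply/andP; split; [apply/eqP => /(congr1 val) | rewrite /Dnm_adj /=].
    * have K : keepm (Some (inr (s i))).
        rewrite keepE; apply: contra ik => /eqP E.
        by apply/eqP; rewrite -(tpermK k last i) -/s E tpermR.
      exists (@exist (DV n) (fun x => is_true (@keepm n x)) (Some (inr (s i))) K); split.
        by rewrite /= tpermK.
      apply/andP; split; first by apply/eqP => /(congr1 val).
      rewrite /Dnm_adj /=; apply/existsP.
      by exists (@exist (DV n) (fun x => is_true (@keepm n x)) (Some (inl (s i))) erefl); rewrite /= eqxx.
- left.
  have nk : forall j, ~~ e c (l j) by move=> j; exact: none.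
  exists (mkphi c p l); split.
  + move=> x y E; apply: (@inj_lemma _ _ c p l predT) E => //.
    all: try by move=> *; apply: lnc.
    move=> j j' _; exact: (pne j j' (nk j')).
  + move=> x y xy; apply: (@hom_lemma _ e n c p l predT ss) xy => //.
    by move=> j _; apply: sqpl.
  + exists None; split => // i; exists (Some (inr i)); split => //.
    apply/andP; split => //; rewrite /=; apply/existsP.
    by exists (Some (inl i)); rewrite /= eqxx.
Qed.
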